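(* Assume $X$ satisfies the $G$-latent model with covariance $\Sigma=ACA^t+\Gamma$. (i) If $\Delta(C)>\frac{2}{m}|\Gamma|_V$, then $B^*$ is the unique maximizer of $B\mapsto\langle\Sigma,B\rangle$ over $\mathcal{C}$. (ii) If $\Delta(C)>0$, then $B^*$ is the unique maximizer of $B\mapsto\langle\Sigma-\Gamma,B\rangle$ over $\mathcal{C}$.
   Context: Let $G=\{G_1,\dots,G_K\}$ be a partition of $[p]$ into nonempty groups, $k(a)$ the index with $a\in G_{k(a)}$, $m=\min_k|G_k|$. A centered random vector $X$ satisfies the $G$-latent model if $X_a=Z_{k(a)}+E_a$ for all $a$, where $Z\in\mathbb{R}^K$ is centered, $E\in\mathbb{R}^p$ is centered, independent of $Z$, with independent coordinates and $\mathrm{Var}(E_a)=\gamma_{k(a)}$. Then $\Sigma=\mathrm{Cov}(X)=ACA^t+\Gamma$ with $A_{ak}=1_{\{a\in G_k\}}$, $C=\mathrm{Cov}(Z)$, $\Gamma=\mathrm{diag}(\gamma_{k(a)})_a$. $\Delta(C)=\min_{j<k}(C_{jj}+C_{kk}-2C_{jk})$. For diagonal $D$, $|D|_V=\max_aD_{aa}-\min_aD_{aa}$. $B^*$ is the $p\times p$ matrix with $B^*_{ab}=1/|G_k|$ if $a,b\in G_k$ for some $k$, and $0$ otherwise. $\langle M,N\rangle=\mathrm{tr}(M^tN)$. $\mathcal{C}$ is the set of symmetric positive semidefinite $p\times p$ matrices $B$ with $\sum_aB_{ab}=1$ for all $b$, $B_{ab}\ge0$ for all $a,b$, and $\mathrm{tr}(B)=K$.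 *)

(* Defs.v *)
From HB Require Import structures.
From mathcomp Require Import all_boot all_order all_algebra.
Set Implicit Arguments. Unset Strict Implicit. Unset Printing Implicit Defensive.
Import Order.TTheory GRing.Theory Num.Theory.
Local Open Scope ring_scope.

(* The partition G of [p] into K groups is encoded by the group-index map
   k : 'I_p -> 'I_K (a is in G_{k a}); groups nonempty = k surjective. *)
Definition group_of (p K : nat) (k : 'I_p -> 'I_K) (j : 'I_K) : {set 'I_p} :=
  [set a | k a == j].

Definition nonempty_groups (p K : nat) (k : 'I_p -> 'I_K) : Prop :=
  forall j : 'I_K, exists a : 'I_p, k a = j.

(* m = min_k |G_k| (the default p is irrelevant when K >= 1, since |G_k| <= p) *)
Definition min_group_size (p K : nat) (k : 'I_p -> 'I_K) : nat :=
  \big[minn/p]_(j < K) #|group_of k j|.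

Definition memb_mx (R : nzRingType) (p K : nat) (k : 'I_p -> 'I_K) : 'M[R]_(p, K) :=
  \matrix_(a, j) (k a == j)%:R.

Definition Gamma_mx (R : nzRingType) (p K : nat) (k : 'I_p -> 'I_K)
  (gamma : 'I_K -> R) : 'M[R]_p :=
  diag_mx (\row_a gamma (k a)).

Definition Sigma_mx (R : nzRingType) (p K : nat) (k : 'I_p -> 'I_K)
  (C : 'M[R]_K) (gamma : 'I_K -> R) : 'M[R]_p :=
  memb_mx R k *m C *m (memb_mx R k)^T + Gamma_mx k gamma.

Definition Bstar (R : fieldType) (p K : nat) (k : 'I_p -> 'I_K) : 'M[R]_p :=
  \matrix_(a, b) (if k a == k b then (#|group_of k (k a)|%:R)^-1 else 0).

Definition diag_var (R : realDomainType) (p : nat) (D : 'M[R]_p) : R :=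
  let s := [seq D a a | a <- enum 'I_p] in
  \big[Num.max/head 0 s]_(x <- s) x - \big[Num.min/head 0 s]_(x <- s) x.

Definition frob (R : nzRingType) (p : nat) (M N : 'M[R]_p) : R := \tr (M^T *m N).

Definition sym_psd (R : numDomainType) (n : nat) (M : 'M[R]_n) : Prop :=
  M^T = M /\ forall x : 'cV[R]_n, 0 <= (x^T *m M *m x) 0 0.

Definition Cset (R : numDomainType) (p K : nat) (B : 'M[R]_p) : Prop :=
  [/\ sym_psd B,
      (forall b : 'I_p, \sum_(a < p) B a b = 1),
      (forall a b : 'I_p, 0 <= B a b) &
      \tr B = K%:R].

Definition unique_maximizer (R : numDomainType) (p K : nat) (S B0 : 'M[R]_p) : Prop :=
  Cset K B0 /\ forall B, Cset K B -> B <> B0 -> frob S B < frob S B0.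

(* Delta(C) > t, with Delta(C) = min_{j<k} (C_jj + C_kk - 2 C_jk)
   (vacuous when K = 1, i.e. min over the empty set = +infinity) *)
Definition Delta_gt (R : numDomainType) (K : nat) (C : 'M[R]_K) (t : R) : Prop :=
  forall j l : 'I_K, (j < l)%N -> t < C j j + C l l - 2 * C j l.

(* Main.v *)
Require Import Defs.
From HB Require Import structures.
From mathcomp Require Import all_boot all_order all_algebra.
From mathcomp Require Import ring lra.
Import Order.TTheory GRing.Theory Num.Theory.
Local Open Scope ring_scope.
Set Implicit Arguments. Unset Strict Implicit.

Definition nn (R : nzRingType) p K (k : 'I_p -> 'I_K) (a : 'I_p) : R :=
  #|group_of k (k a)|%:R.

Lemma sum_block_const (R : nzRingType) p K (k : 'I_p -> 'I_K) (x : R) j :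
  \sum_(b | k b == j) x = x * #|group_of k j|%:R.
Proof. by rewrite sumr_const /group_of cardsE mulr_natr. Qed.

Lemma card_group_gt0 p K (k : 'I_p -> 'I_K) a : (0 < #|group_of k (k a)|)%N.
Proof. by apply/card_gt0P; exists a; rewrite inE. Qed.

Lemma nn_ge1 (R : numDomainType) p K (k : 'I_p -> 'I_K) a : 1 <= nn R k a.
Proof. by rewrite /nn ler1n card_group_gt0. Qed.

Lemma nn_neq0 (R : numDomainType) p K (k : 'I_p -> 'I_K) a : nn R k a != 0.
Proof. by rewrite /nn pnatr_eq0 -lt0n card_group_gt0. Qed.

Lemma block_sum_eq (R : nzRingType) p K (k : 'I_p -> 'I_K) (h : 'I_K -> R) (y z : 'I_p -> R) :
  (forall j, \sum_(a | k a == j) y a = \sum_(a | k a == j) z a) ->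
  \sum_a h (k a) * y a = \sum_a h (k a) * z a.
Proof.
move=> H.
rewrite (partition_big k predT) // [RHS](partition_big k predT) //.
apply: eq_bigr => j _.
transitivity (h j * \sum_(a | k a == j) y a).
  by rewrite mulr_sumr; apply: eq_bigr => i /eqP ->.
rewrite H mulr_sumr; apply: eq_bigr => i /= /eqP ->; done.
Qed.

Lemma sum_invnn (R : numFieldType) p K (k : 'I_p -> 'I_K) :
  nonempty_groups k -> \sum_a (nn R k a)^-1 = K%:R.
Proof.
move=> Hne.
rewrite (partition_big k predT) //.
transitivity (\sum_(j < K) (1 : R)); last by rewrite sumr_const card_ord.
apply: eq_bigr => j _.
have [a0 Ha0] := Hne j.
transitivity (\sum_(a | k a == j) (#|group_of k j|%:R : R)^-1).
  by apply: eq_big => [a|a /eqP <-] //.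
rewrite sum_block_const mulVf //.
by rewrite -Ha0 pnatr_eq0 -lt0n card_group_gt0.
Qed.

Definition oo (R : nzRingType) p K (k : 'I_p -> 'I_K) (B : 'M[R]_p) a :=
  \sum_(b | k b != k a) B a b.
Definition uu (R : numFieldType) p K (k : 'I_p -> 'I_K) (B : 'M[R]_p) a :=
  \sum_(b | k b == k a) (B a a + B b b - 2 * B a b) / 2.
Definition Tb (R : nzRingType) p K (k : 'I_p -> 'I_K) (B : 'M[R]_p) a :=
  \sum_(b | k b == k a) B b b.

Lemma ou_eq (R : numFieldType) p K (k : 'I_p -> 'I_K) (B : 'M[R]_p) a :
  \sum_b B a b = 1 ->
  oo k B a - uu k B a = 1 - (nn R k a * B a a + Tb k B a) / 2.
Proof.
move=> Hr.
have Hs : \sum_(b | k b == k a) B a b = 1 - oo k B a.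
  by move: Hr; rewrite (bigID (fun b => k b == k a)) /= => <-; rewrite /oo addrK.
rewrite /uu -mulr_suml sumrB big_split /= -mulr_sumr Hs sum_block_const.
rewrite /Tb /nn.
set T := \sum_(b | _) B b b.
set n := (#|_|%:R : R).
set o := oo k B a.
by field.
Qed.

Lemma block_id (R : numFieldType) p K (k : 'I_p -> 'I_K) (B : 'M[R]_p) j :
  nonempty_groups k -> (forall a, \sum_b B a b = 1) ->
  \sum_(a | k a == j) ((nn R k a)^-1 - B a a) =
  \sum_(a | k a == j) (oo k B a - uu k B a) / nn R k a.
Proof.
move=> Hne Hr.
set n := (#|group_of k j|%:R : R).
set T := \sum_(b | k b == j) B b b.
have n0 : n != 0 by have [a0 Ha0] := Hne j; rewrite /n -Ha0; apply: nn_neq0.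
transitivity (\sum_(a | k a == j) (n^-1 - B a a)).
  by apply: eq_bigr => a /eqP Ha; rewrite /n -Ha.
transitivity (\sum_(a | k a == j) (1 - (n * B a a + T) / 2) / n); last first.
  by apply: eq_bigr => a /eqP Ha; rewrite ou_eq // /nn /Tb /n /T Ha.
rewrite -mulr_suml !sumrB -mulr_suml big_split /= -mulr_sumr !sum_block_const.
rewrite -/n -/T.
by field.
Qed.

Lemma term_bound (R : realFieldType) (g c V m n o u : R) :
  0 <= o -> 0 <= u -> 0 < m -> m <= n -> g <= c -> c <= g + V ->
  - ((V / m) * o) <= (g - c) * ((o - u) / n).
Proof.
move=> o0 u0 m0 mn gc cg.
have n0 : 0 < n by apply: lt_le_trans mn.
have w0 : 0 <= n^-1 by rewrite invr_ge0 ltW.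
have wz : n^-1 <= m^-1 by rewrite lef_pV2 ?posrE.
have h1 : 0 <= (c - g) * u * n^-1 by rewrite !mulr_ge0 // subr_ge0.
have h2 : (c - g) * o * n^-1 <= V * o * m^-1.
  apply: ler_pM => //; first by rewrite mulr_ge0 // subr_ge0.
  apply: ler_pM => //; first by rewrite subr_ge0.
  by rewrite lerBlDl.
rewrite /= in h1 h2 *.
nra.
Qed.

Lemma uu_ge0 (R : realFieldType) p K (k : 'I_p -> 'I_K) (B : 'M[R]_p) a :
  (forall a b, 2 * B a b <= B a a + B b b) -> 0 <= uu k B a.
Proof.
move=> Hq; rewrite /uu; apply: sumr_ge0 => b _.
by rewrite divr_ge0 // subr_ge0.
Qed.

Lemma oo_ge0 (R : realFieldType) p K (k : 'I_p -> 'I_K) (B : 'M[R]_p) a :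
  (forall a b, 0 <= B a b) -> 0 <= oo k B a.
Proof. by move=> Hn; rewrite /oo; apply: sumr_ge0. Qed.

Lemma G_bound (R : realFieldType) p K (k : 'I_p -> 'I_K) (B : 'M[R]_p) (g : 'I_K -> R)
  (V m c : R) :
  nonempty_groups k -> (forall a, \sum_b B a b = 1) -> (forall a b, 0 <= B a b) ->
  (forall a b, 2 * B a b <= B a a + B b b) -> \sum_a B a a = K%:R ->
  (forall a, 0 < m <= nn R k a) -> (forall a, g (k a) <= c <= g (k a) + V) ->
  - \sum_a (V / m) * oo k B a <= \sum_a g (k a) * ((nn R k a)^-1 - B a a).
Proof.
move=> Hne Hr Hn Hq Htr Hm Hc.
have -> : \sum_a g (k a) * ((nn R k a)^-1 - B a a) =
          \sum_a (g (k a) - c) * ((nn R k a)^-1 - B a a).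
  have : \sum_a c * ((nn R k a)^-1 - B a a) = 0.
    by rewrite -mulr_sumr sumrB sum_invnn // Htr subrr mulr0.
  move=> H0.
  transitivity (\sum_a ((g (k a) - c) * ((nn R k a)^-1 - B a a) + c * ((nn R k a)^-1 - B a a))).
    by apply: eq_bigr => a _; ring.
  by rewrite big_split /= H0 addr0.
rewrite (block_sum_eq (fun j => g j - c) (z := fun a => (oo k B a - uu k B a) / nn R k a));
  last by move=> j; apply: block_id.
rewrite -sumrN; apply: ler_sum => a _.
have /andP[m0 mn] := Hm a; have /andP[gc cg] := Hc a.
by apply: term_bound => //; [apply: oo_ge0 | apply: uu_ge0].
Qed.

Lemma Bstar_entry (R : fieldType) p K (k : 'I_p -> 'I_K) a b :
  Bstar R k a b = if k a == k b then (nn R k a)^-1 else 0.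
Proof. by rewrite /Bstar mxE. Qed.

Lemma A_star (R : numFieldType) p K (k : 'I_p -> 'I_K) (C : 'M[R]_K) a :
  \sum_b C (k a) (k b) * Bstar R k a b = C (k a) (k a).
Proof.
rewrite (bigID (fun b => k b == k a)) /= [X in _ + X]big1 ?addr0; last first.
  by move=> b Hb; rewrite Bstar_entry eq_sym (negbTE Hb) mulr0.
transitivity (\sum_(b | k b == k a) C (k a) (k a) * (nn R k a)^-1).
  by apply: eq_bigr => b /eqP Hb; rewrite Bstar_entry Hb eqxx.
by rewrite sum_block_const mulfVK // nn_neq0.
Qed.

Definition dd (R : nzRingType) p K (k : 'I_p -> 'I_K) (C : 'M[R]_K) a b :=
  C (k a) (k a) + C (k b) (k b) - 2 * C (k a) (k b).

Lemma A_part (R : numFieldType) p K (k : 'I_p -> 'I_K) (C : 'M[R]_K) (B : 'M[R]_p) :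
  (forall j l, C j l = C l j) -> (forall a b, B a b = B b a) ->
  (forall a, \sum_b B a b = 1) ->
  \sum_a \sum_b C (k a) (k b) * Bstar R k a b - \sum_a \sum_b C (k a) (k b) * B a b =
  \sum_a \sum_(b | k b != k a) (dd k C a b / 2) * B a b.
Proof.
move=> HC HB Hr.
have -> : \sum_a \sum_b C (k a) (k b) * Bstar R k a b =
          \sum_a \sum_b C (k a) (k a) * B a b.
  by apply: eq_bigr => a _; rewrite A_star -mulr_sumr Hr mulr1.
transitivity (\sum_a \sum_b (C (k a) (k a) - C (k a) (k b)) * B a b).
  rewrite -sumrB; apply: eq_bigr => a _; rewrite -sumrB; apply: eq_bigr => b _.
  by rewrite mulrBl.
match goal with |- ?X = _ => set P := X end.
have HP : P = \sum_a \sum_b (C (k b) (k b) - C (k a) (k b)) * B a b.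
  rewrite /P exchange_big /=; apply: eq_bigr => a _.
  by apply: eq_bigr => b _; rewrite HB (HC (k a)).
transitivity ((P + P) / 2); first by field.
rewrite {2}HP /P -big_split /= mulr_suml; apply: eq_bigr => a _.
rewrite -big_split /= mulr_suml (bigID (fun b => k b == k a)) /=.
rewrite big1 ?add0r; last first.
  by move=> b /eqP ->; rewrite !subrr; ring.
by apply: eq_bigr => b _; rewrite /dd; field.
Qed.

Definition FF (R : nzRingType) p K (k : 'I_p -> 'I_K) (C : 'M[R]_K) (g : 'I_K -> R)
  (B : 'M[R]_p) := \sum_a \sum_b C (k a) (k b) * B a b + \sum_a g (k a) * B a a.

Lemma Dbound (R : realFieldType) p K (k : 'I_p -> 'I_K) (C : 'M[R]_K) (g : 'I_K -> R)
  (B : 'M[R]_p) (V m c : R) :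
  (forall j l, C j l = C l j) -> (forall a b, B a b = B b a) ->
  nonempty_groups k -> (forall a, \sum_b B a b = 1) -> (forall a b, 0 <= B a b) ->
  (forall a b, 2 * B a b <= B a a + B b b) -> \sum_a B a a = K%:R ->
  (forall a, 0 < m <= nn R k a) -> (forall a, g (k a) <= c <= g (k a) + V) ->
  \sum_a \sum_(b | k b != k a) (dd k C a b / 2 - V / m) * B a b <=
  FF k C g (Bstar R k) - FF k C g B.
Proof.
move=> HC HB Hne Hr Hn Hq Htr Hm Hc.
have -> : FF k C g (Bstar R k) - FF k C g B =
  (\sum_a \sum_b C (k a) (k b) * Bstar R k a b - \sum_a \sum_b C (k a) (k b) * B a b)
  + \sum_a g (k a) * ((nn R k a)^-1 - B a a).
  rewrite /FF.
  have -> : \sum_a g (k a) * ((nn R k a)^-1 - B a a) =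
     \sum_a g (k a) * Bstar R k a a - \sum_a g (k a) * B a a.
    rewrite -sumrB; apply: eq_bigr => a _; by rewrite Bstar_entry eqxx mulrBr.
  ring.
rewrite A_part //.
have -> : \sum_a \sum_(b | k b != k a) (dd k C a b / 2 - V / m) * B a b =
   \sum_a \sum_(b | k b != k a) (dd k C a b / 2) * B a b - \sum_a (V / m) * oo k B a.
  rewrite -sumrB; apply: eq_bigr => a _; rewrite /oo mulr_sumr -sumrB.
  by apply: eq_bigr => b _; rewrite mulrBl.
rewrite lerD2l.
by apply: (G_bound (c := c)).
Qed.

Lemma block_Bstar (R : realFieldType) p K (k : 'I_p -> 'I_K) (B : 'M[R]_p) :
  (forall a b, B a b = B b a) ->
  nonempty_groups k -> (forall a, \sum_b B a b = 1) -> (forall a b, 0 <= B a b) ->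
  (forall a b, 2 * B a b <= B a a + B b b) -> \sum_a B a a = K%:R ->
  (forall a b, k a != k b -> B a b = 0) -> B = Bstar R k.
Proof.
move=> HB Hne Hr Hn Hq Htr Hoff.
have two0 : (2:R) != 0 by rewrite pnatr_eq0.
have Ho : forall a, oo k B a = 0.
  by move=> a; rewrite /oo big1 // => b Hb; rewrite Hoff // eq_sym.
pose F j := \sum_(a | k a == j) uu k B a / nn R k a.
have F0 : forall j, 0 <= F j.
  move=> j; apply: sumr_ge0 => a _; rewrite divr_ge0 ?uu_ge0 //.
have Hs : forall j, \sum_(a | k a == j) ((nn R k a)^-1 - B a a) = - F j.
  move=> j; rewrite block_id // /F -sumrN; apply: eq_bigr => a _.
  by rewrite Ho sub0r mulNr.
have HF : \sum_j F j = 0.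
  have : \sum_a ((nn R k a)^-1 - B a a) = 0.
    by rewrite sumrB sum_invnn // Htr subrr.
  rewrite (partition_big k predT) // => H0.
  apply/eqP; rewrite -oppr_eq0 -sumrN; apply/eqP; rewrite -[RHS]H0.
  apply: eq_bigr => j _; rewrite -Hs; by apply: eq_bigl.
have Hu : forall a, uu k B a = 0.
  move=> a.
  have := @psumr_eq0P _ _ _ _ (fun j _ => F0 j) HF (k a) isT.
  rewrite /F => H.
  have /eqP : uu k B a / nn R k a = 0.
    apply: (@psumr_eq0P _ _ _ _ _ H a (eqxx _)) => b _.
    by rewrite divr_ge0 ?uu_ge0.
  by rewrite mulf_eq0 invr_eq0 (negbTE (nn_neq0 R k a)) orbF => /eqP.
have Hq0 : forall a b, k b == k a -> B a a + B b b - 2 * B a b = 0.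
  move=> a b Hab.
  have /eqP : (B a a + B b b - 2 * B a b) / 2 = 0.
    apply: (@psumr_eq0P _ _ _ _ _ (Hu a) b Hab) => c _.
    by rewrite divr_ge0 // subr_ge0.
  by rewrite mulf_eq0 invr_eq0 pnatr_eq0 orbF => /eqP.
have H7 : forall a, nn R k a * B a a + Tb k B a = 2.
  move=> a; have := ou_eq k (Hr a); rewrite Ho Hu subrr => /eqP.
  rewrite eq_sym subr_eq0 => /eqP H.
  have : 2 * ((nn R k a * B a a + Tb k B a) / 2) = 2 by rewrite -H mulr1.
  by move=> <-; field.
have H8 : forall a b, k a = k b -> B a a = B b b.
  move=> a b Hab; have := H7 a; rewrite -(H7 b) /nn /Tb Hab => /addIr.
  by apply: mulfI; rewrite pnatr_eq0 -lt0n -Hab card_group_gt0.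
have H10 : forall a, B a a = (nn R k a)^-1.
  move=> a; have := H7 a.
  have -> : Tb k B a = nn R k a * B a a.
    rewrite /Tb (eq_bigr (fun=> B a a)); last by move=> b /eqP Hb; apply: H8.
    by rewrite sum_block_const mulrC.
  move=> H; have n0 := nn_neq0 R k a.
  apply: (mulfI n0); rewrite mulfV //.
  have : 2 * (nn R k a * B a a) = 2 * 1 by rewrite mulr1 -[RHS]H; ring.
  by apply: (mulfI two0).
apply/matrixP => a b; rewrite Bstar_entry.
case: ifP => Hab.
  have := Hq0 a b; rewrite eq_sym Hab => /(_ isT).
  rewrite (H8 b a); last by apply/eqP; rewrite eq_sym.
  move/eqP; rewrite subr_eq0 => /eqP H.
  rewrite -H10; have : 2 * B a b = 2 * B a a by rewrite -H; ring.
  by apply: (mulfI two0).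
by rewrite Hoff // Hab.
Qed.

Lemma pos_add (R : realFieldType) (x y : R) : 0 < x -> 0 <= y -> 0 < x + y.
Proof. by move=> *; lra. Qed.

Lemma core (R : realFieldType) p K (k : 'I_p -> 'I_K) (C : 'M[R]_K) (g : 'I_K -> R)
  (B : 'M[R]_p) (V m c : R) :
  (forall j l, C j l = C l j) -> (forall a b, B a b = B b a) ->
  nonempty_groups k -> (forall a, \sum_b B a b = 1) -> (forall a b, 0 <= B a b) ->
  (forall a b, 2 * B a b <= B a a + B b b) -> \sum_a B a a = K%:R ->
  (forall a, 0 < m <= nn R k a) -> (forall a, g (k a) <= c <= g (k a) + V) ->
  (forall a b, k a != k b -> 2 * (V / m) < dd k C a b) ->
  B <> Bstar R k -> FF k C g B < FF k C g (Bstar R k).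
Proof.
move=> HC HB Hne Hr Hn Hq Htr Hm Hc Hd HneB.
case: (boolP [exists a, [exists b, (k a != k b) && (B a b != 0)]]); last first.
  move=> /existsPn Hno; exfalso; apply: HneB.
  apply: block_Bstar => // a b Hab.
  have /existsPn /(_ b) := Hno a.
  by rewrite Hab /= negbK => /eqP.
move=> /existsP [a0 /existsP [b0 /andP [Hab0 HB0]]].
rewrite -subr_gt0.
apply: lt_le_trans (Dbound HC HB Hne Hr Hn Hq Htr Hm Hc).
have f0 : forall a b, k b != k a -> 0 <= (dd k C a b / 2 - V / m) * B a b.
  move=> a b Hab; rewrite mulr_ge0 // subr_ge0.
  have := Hd a b; rewrite eq_sym => /(_ Hab) H; apply: ltW.
  by rewrite ltr_pdivlMr // mulrC.
rewrite (bigD1 a0) //=.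
apply: pos_add; last by apply: sumr_ge0 => a _; apply: sumr_ge0 => b; apply: f0.
rewrite (bigD1 b0) /=; last by rewrite eq_sym.
apply: pos_add; last by apply: sumr_ge0 => b /andP[Hb _]; apply: f0.
rewrite mulr_gt0 //.
  rewrite subr_gt0; have := Hd a0 b0 Hab0 => H.
  by rewrite ltr_pdivlMr // mulrC.
by rewrite lt_def HB0 Hn.
Qed.

Lemma sum_deltaL (R : nzRingType) n (a : 'I_n) (F : 'I_n -> R) :
  \sum_i (i == a)%:R * F i = F a.
Proof.
rewrite (bigD1 a) //= eqxx mul1r big1 ?addr0 // => i /negbTE ->; by rewrite mul0r.
Qed.

Lemma sum_deltaR (R : nzRingType) n (a : 'I_n) (F : 'I_n -> R) :
  \sum_i F i * (i == a)%:R = F a.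
Proof.
rewrite (bigD1 a) //= eqxx mulr1 big1 ?addr0 // => i /negbTE ->; by rewrite mulr0.
Qed.

Lemma psd_pair (R : realFieldType) p (B : 'M[R]_p) :
  sym_psd B -> forall a b, 2 * B a b <= B a a + B b b.
Proof.
move=> [HT Hpsd] a b.
have HB : B b a = B a b by rewrite -{1}HT mxE.
pose x : 'cV[R]_p := \col_i ((i == a)%:R - (i == b)%:R).
have := Hpsd x.
have -> : (x^T *m B *m x) 0 0 = B a a - B b a - (B a b - B b b).
  rewrite mxE.
  under eq_bigr => j _ do rewrite mxE.
  under eq_bigr => j _ do (under eq_bigr => i _ do rewrite !mxE; rewrite mxE).
  transitivity (\sum_j (B a j - B b j) * ((j == a)%:R - (j == b)%:R)).
    apply: eq_bigr => j _; congr (_ * _).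
    rewrite (eq_bigr (fun i => (i == a)%:R * B i j - (i == b)%:R * B i j)).
      by rewrite sumrB !sum_deltaL.
    by move=> i _; rewrite mulrBl.
  rewrite (eq_bigr (fun j => (B a j - B b j) * (j == a)%:R - (B a j - B b j) * (j == b)%:R)).
    by rewrite sumrB !sum_deltaR.
  by move=> j _; rewrite mulrBr.
rewrite HB => H; lra.
Qed.

Lemma frobE (R : nzRingType) p (S B : 'M[R]_p) :
  frob S B = \sum_a \sum_b S a b * B a b.
Proof.
rewrite /frob /mxtrace.
transitivity (\sum_i \sum_j S j i * B j i); last by rewrite exchange_big.
by apply: eq_bigr => i _; rewrite mxE; apply: eq_bigr => j _; rewrite mxE.
Qed.

Lemma memb_entry (R : nzRingType) p K (k : 'I_p -> 'I_K) (C : 'M[R]_K) a b :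
  (memb_mx R k *m C *m (memb_mx R k)^T) a b = C (k a) (k b).
Proof.
rewrite mxE.
transitivity (\sum_j C (k a) j * (j == k b)%:R); last by rewrite sum_deltaR.
apply: eq_bigr => j _; rewrite !mxE eq_sym; congr (_ * _).
rewrite (eq_bigr (fun l => (l == k a)%:R * C l j)) ?sum_deltaL // => l _.
by rewrite mxE eq_sym.
Qed.

Lemma frob_Sigma (R : nzRingType) p K (k : 'I_p -> 'I_K) (C : 'M[R]_K) gamma B :
  frob (Sigma_mx k C gamma) B = FF k C gamma B.
Proof.
rewrite frobE /FF -big_split /=; apply: eq_bigr => a _.
rewrite (eq_bigr (fun b => C (k a) (k b) * B a b + (b == a)%:R * (gamma (k a) * B a b))).
  by rewrite big_split /= sum_deltaL.
move=> b _; rewrite /Sigma_mx mxE memb_entry /Gamma_mx mxE mxE mulrDl eq_sym.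
by rewrite -[gamma _ *+ _]mulr_natl mulrA.
Qed.

Lemma frob_Sigma0 (R : realFieldType) p K (k : 'I_p -> 'I_K) (C : 'M[R]_K) gamma B :
  frob (Sigma_mx k C gamma - Gamma_mx k gamma) B = FF k C (fun _ => 0) B.
Proof.
rewrite /Sigma_mx addrK frobE /FF [X in _ = _ + X]big1 ?addr0; last by move=> a _; rewrite mul0r.
by apply: eq_bigr => a _; apply: eq_bigr => b _; rewrite memb_entry.
Qed.

Lemma Cset_Bstar (R : realFieldType) p K (k : 'I_p -> 'I_K) :
  nonempty_groups k -> Cset K (Bstar R k).
Proof.
move=> Hne; split.
- split.
    apply/matrixP => a b; rewrite mxE !Bstar_entry eq_sym.
    by case: ifP => // /eqP H; rewrite /nn H.
  move=> x.
  pose s l := \sum_(i | k i == l) x i 0.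
  pose n l := (#|group_of k l|%:R : R).
  have Hin : forall j, \sum_i x^T 0 i * Bstar R k i j = s (k j) / n (k j).
    move=> j; rewrite (bigID (fun i => k i == k j)) /= [X in _ + X]big1 ?addr0.
      rewrite /s mulr_suml; apply: eq_bigr => i /eqP Hi.
      by rewrite mxE Bstar_entry Hi eqxx /nn Hi.
    by move=> i Hi; rewrite Bstar_entry (negbTE Hi) mulr0.
  rewrite mxE (eq_bigr (fun j => s (k j) / n (k j) * x j 0)); last first.
    by move=> j _; rewrite mxE Hin.
  rewrite (partition_big k predT) //=; apply: sumr_ge0 => l _.
  rewrite (eq_bigr (fun j => s l / n l * x j 0)); last by move=> j /eqP ->.
  rewrite -mulr_sumr.
  have -> : \sum_(i | true && (k i == l)) x i 0 = s l by apply: eq_bigl.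
  by rewrite mulrAC mulr_ge0 // ?invr_ge0 // -expr2 sqr_ge0.
- move=> b; rewrite (bigID (fun a => k a == k b)) /= [X in _ + X]big1 ?addr0.
    rewrite (eq_bigr (fun a => (nn R k b)^-1)); last first.
      by move=> a /eqP Ha; rewrite Bstar_entry Ha eqxx /nn Ha.
    by rewrite sum_block_const mulVf // nn_neq0.
  by move=> a Ha; rewrite Bstar_entry (negbTE Ha).
- by move=> a b; rewrite Bstar_entry; case: ifP => // _; rewrite invr_ge0.
- rewrite /mxtrace -(sum_invnn R Hne); apply: eq_bigr => a _.
  by rewrite Bstar_entry eqxx.
Qed.

Lemma Cset_facts (R : realFieldType) p K (B : 'M[R]_p) :
  Cset K B ->
  [/\ forall a b, B a b = B b a, forall a, \sum_b B a b = 1,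
      forall a b, 0 <= B a b, forall a b, 2 * B a b <= B a a + B b b &
      \sum_a B a a = K%:R].
Proof.
move=> [Hs Hcol Hn Htr].
have HB : forall a b, B a b = B b a.
  by move=> a b; case: Hs => HT _; rewrite -{1}HT mxE.
split => //.
- by move=> a; rewrite -(Hcol a); apply: eq_bigr => b _; rewrite HB.
- exact: psd_pair.
Qed.

Lemma Delta_dd (R : realFieldType) p K (k : 'I_p -> 'I_K) (C : 'M[R]_K) t :
  (forall j l, C j l = C l j) -> Delta_gt C t ->
  forall a b, k a != k b -> t < dd k C a b.
Proof.
move=> HC Hd a b Hab; rewrite /dd.
case: (ltngtP (k a) (k b)) => H.
- exact: Hd.
- by have := Hd _ _ H; rewrite (HC (k b) (k a)) [C (k b) (k b) + _]addrC.
- by exfalso; move/negP: Hab; apply; apply/eqP/val_inj.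
Qed.

Lemma bigmin_le (I : eqType) (r : seq I) (F : I -> nat) (x : nat) (j0 : I) :
  j0 \in r -> (\big[minn/x]_(j <- r) F j <= F j0)%N.
Proof.
elim: r => // y r IH; rewrite in_cons big_cons => /orP[/eqP -> | H].
  exact: geq_minl.
by rewrite geq_min IH ?orbT.
Qed.

Lemma min_group_bounds p K (k : 'I_p -> 'I_K) :
  nonempty_groups k -> forall a, (0 < min_group_size k <= #|group_of k (k a)|)%N.
Proof.
move=> Hne a; apply/andP; split.
  rewrite /min_group_size; apply: (big_ind (fun x => 0 < x)%N).
  - by case: p k Hne a => [|p'] k' Hne' [].
  - by move=> x y Hx Hy; rewrite leq_min Hx Hy.
  - by move=> j _; have [a0 <-] := Hne j; apply: card_group_gt0.
by rewrite /min_group_size bigmin_le // mem_index_enum.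
Qed.

Lemma diag_bounds (R : realFieldType) p K (k : 'I_p -> 'I_K) (g : 'I_K -> R) :
  exists c, forall a, g (k a) <= c <= g (k a) + diag_var (Gamma_mx k g).
Proof.
rewrite /diag_var.
set s := [seq _ | _ <- _].
set h := head 0 s.
exists (\big[Num.max/h]_(x <- s) x) => a.
have Ha : Gamma_mx k g a a \in s by apply/mapP; exists a; rewrite ?mem_enum.
have HG : Gamma_mx k g a a = g (k a) by rewrite /Gamma_mx !mxE eqxx mulr1n.
have H1 := le_bigmax_seq h (Gamma_mx k g a a) predT id Ha isT.
have H2 := ge_bigmin_seq h (Gamma_mx k g a a) predT id Ha isT.
rewrite HG /= in H1 H2.
apply/andP; split; first exact: H1.
move: H2; set M := \big[Num.max/h]_(x <- s) x; set m := \big[Num.min/h]_(x <- s) x => H2; lra.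
Qed.

Theorem mainTheorem4 (R : realFieldType) (p K : nat) (k : 'I_p -> 'I_K)
  (C : 'M[R]_K) (gamma : 'I_K -> R) :
  nonempty_groups k ->
  sym_psd C ->
  (forall j, 0 <= gamma j) ->
  ((Delta_gt C (2 / (min_group_size k)%:R * diag_var (Gamma_mx k gamma)) ->
      unique_maximizer K (Sigma_mx k C gamma) (Bstar R k))
   /\
   (Delta_gt C 0 ->
      unique_maximizer K (Sigma_mx k C gamma - Gamma_mx k gamma) (Bstar R k))).
Proof.
move=> Hne [HCT _] _.
have HC : forall j l, C j l = C l j by move=> j l; rewrite -{1}HCT mxE.
split => Hd; split; try exact: Cset_Bstar; move=> B HB HneB;
  have [Bs Br Bn Bq Btr] := Cset_facts HB.
- rewrite !frob_Sigma.
  have [c Hc] := diag_bounds k gamma.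
  apply: (core (V := diag_var (Gamma_mx k gamma)) (m := (min_group_size k)%:R) (c := c)) => //.
  + move=> a; have /andP[H1 H2] := min_group_bounds Hne a.
    by rewrite ltr0n H1 /nn ler_nat.
  + move=> a b Hab; have := Delta_dd HC Hd Hab.
    suff -> : 2 * (diag_var (Gamma_mx k gamma) / (min_group_size k)%:R) =
      2 / (min_group_size k)%:R * diag_var (Gamma_mx k gamma) by [].
    ring.
- rewrite !frob_Sigma0.
  apply: (core (V := 0) (m := 1) (c := 0)) => //.
  + by move=> a; rewrite ltr01 nn_ge1.
  + by move=> a; rewrite addr0 lexx.
  + by move=> a b Hab; rewrite mul0r mulr0; apply: Delta_dd.
Qed.
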